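(* Let $(L,\le,\bot,\top)$ be a complete lattice and $(\&_i,\swarrow^i,\nwarrow_i)$, $i=1,\dots,n$, adjoint triples on $L$ with $x\,\&_i\,\top=\top\,\&_i\,x=x$ for all $x\in L$ and all $i$. Let $(A,B,R,\sigma)$ be a normalized context whose concept lattice $\mathcal{M}$ satisfies the ascending chain condition and which has a decomposition into independent subcontexts $\{(A_\lambda,B_\lambda,R_\lambda,\sigma_\lambda)\mid\lambda\in\Lambda\}$. Then for every $\lambda\in\Lambda$ the set $$K_\lambda=\{\langle g,f\rangle\in\mathcal{M}\mid\langle g,f\rangle=\textstyle\bigwedge M_g^{A_\lambda}\}\cup\{\langle g_\top,f_\bot\rangle,\langle g_\bot,f_\top\rangle\}$$ is a complete block of $\mathcal{M}$.
   Context: An adjoint triple on $L$ is a triple of maps $\&,\swarrow,\nwarrow\colon L\times L\to L$ with $x\le z\swarrow y\iff x\& y\le z\iff y\le z\nwarrow x$. A context is $(A,B,R,\sigma)$ with $A,B$ non-empty, $R\colon A\times B\to L$, $\sigma\colon A\times B\to\{1,\dots,n\}$; normalized means every $a\in A$ has $b_1,b_2$ with $R(a,b_1)\ne\bot$, $R(a,b_2)=\bot$, and every $b\in B$ has $a_1,a_2$ with $R(a_1,b)\ne\bot$, $R(a_2,b)=\bot$. For $g\colon B\to L$, $f\colon A\to L$: $g^\uparrow(a)=\inf_{b}R(a,b)\swarrow^{\sigma(a,b)}g(b)$, $f^\downarrow(b)=\inf_{a}R(a,b)\nwarrow_{\sigma(a,b)}f(a)$. $\mathcal{M}$ is the complete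 lattice of pairs $\langle g,f\rangle$ with $g^\uparrow=f$, $f^\downarrow=g$, ordered by $g_1\le g_2$ pointwise; its top is $\langle g_\top,f_\bot\rangle$ and bottom $\langle g_\bot,f_\top\rangle$, where $g_\top,g_\bot,f_\top,f_\bot$ are constant maps with the indicated values. $\phi_{a,x}\colon A\to L$ takes value $x$ at $a$ and $\bot$ elsewhere. Meet-irreducible concepts (elements $c\ne$ top with $c=d\wedge e\Rightarrow c\in\{d,e\}$) all have the form $\langle\phi_{a,x}^\downarrow,\phi_{a,x}^{\downarrow\uparrow}\rangle$. For $A'\subseteq A$, $M_F^{A'}$ is the set of meet-irreducible concepts equal to $\langle\phi_{a,x}^\downarrow,\phi_{a,x}^{\downarrow\uparrow}\rangle$ for some $a\in A'$, $x\in L$, and $M_g^{A'}=\{c\in M_F^{A'}\mid\langle g,f\rangle\preceq c\}$. Separable subcontext: $(Y,X,R_{Y\times X},\sigma_{Y\times X})$ with $Y\subsetneq A$, $X\subsetneq B$ non-empty, some $R(a,b)\ne\bot$ with $a\in Y,b\in X$, $R=\bot$ on $Y\times(B\setminus X)$ and on $(A\setminus Y)\times X$. $\&$ has zero-divisors if $x\&y=\bot$ for some $x,y\neq\bot$. Decomposition into independent subcontexts: non-empty $\Lambda$, each $(A_\lambda,B_\lambda,R_\lambda,\sigma_\lambda)$ (restrictions) separable, $\{A_\lambda\}$ partitions $A$, $\{B_\lambda\}$ partitions $B$, and $\&_{\sigma(a,b)}$ has no zero-divisors whenever $(a,b)\in((A\setminus A_\lambda)\times B_\lambda)\cup(A_\lambda\times(B\setminus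 B_\lambda))$ for some $\lambda$. For a bounded lattice $(M,\preceq,\bot,\top)$, a block is a sublattice $K\subsetneq M$ with $K\setminus\{\bot,\top\}\ne\varnothing$ and $(\{x\mid k\preceq x\}\cup\{x\mid x\preceq k\})\setminus\{\bot,\top\}\subseteq K$ for all $k\in K\setminus\{\bot,\top\}$; it is complete if $\bot,\top\in K$. *)

(* Defs.v *)
From HB Require Import structures.
From mathcomp Require Import all_boot all_order.
Set Implicit Arguments. Unset Strict Implicit. Unset Printing Implicit Defensive.
Import Order.Theory.
Local Open Scope order_scope.

Section Lat.
Context {d : Order.disp_t} {L : tbLatticeType d}.

Definition is_inf (S : L -> Prop) (x : L) : Prop :=
  (forall y, S y -> x <= y) /\ (forall z, (forall y, S y -> z <= y) -> z <= x).

Definition complete_lattice : Prop := forall S : L -> Prop, exists x, is_inf S x.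

(* (conj, sw, nw) = (&, ↙, ↖):  x <= z ↙ y <-> x & y <= z <-> y <= z ↖ x *)
Definition adjoint_triple (conj sw nw : L -> L -> L) : Prop :=
  forall x y z, (x <= sw z y <-> conj x y <= z) /\ (conj x y <= z <-> y <= nw z x).

Definition has_zero_divisors (conj : L -> L -> L) : Prop :=
  exists x y, x != \bot /\ y != \bot /\ conj x y = \bot.

Variables (n : nat) (A B : eqType) (R : A -> B -> L) (sigma : A -> B -> 'I_n).

Definition normalized_context : Prop :=
  (forall a, (exists b, R a b != \bot) /\ (exists b, R a b = \bot)) /\
  (forall b, (exists a, R a b != \bot) /\ (exists a, R a b = \bot)).

Variables (sw nw : 'I_n -> L -> L -> L).

Definition derive_up (g : B -> L) (f : A -> L) : Prop :=
  forall a, is_inf (fun z => exists b, z = sw (sigma a b) (R a b) (g b)) (f a).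

Definition derive_down (f : A -> L) (g : B -> L) : Prop :=
  forall b, is_inf (fun z => exists a, z = nw (sigma a b) (R a b) (f a)) (g b).

Definition concept_t := ((B -> L) * (A -> L))%type.

Definition is_concept (c : concept_t) : Prop :=
  derive_up c.1 c.2 /\ derive_down c.2 c.1.

Definition cle (c1 c2 : concept_t) : Prop := forall b, c1.1 b <= c2.1 b.

Definition top_concept : concept_t := (fun _ => \top, fun _ => \bot).
Definition bot_concept : concept_t := (fun _ => \bot, fun _ => \top).

Definition phi (a : A) (x : L) : A -> L := fun a' => if a' == a then x else \bot.

End Lat.

Section Poset.
Variables (T : Type) (P : T -> Prop) (le : T -> T -> Prop).

Definition is_glb_in (S : T -> Prop) (x : T) : Prop :=
  P x /\ (forall y, S y -> le x y) /\
  (forall z, P z -> (forall y, S y -> le z y) -> le z x).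

Definition is_lub_in (S : T -> Prop) (x : T) : Prop :=
  P x /\ (forall y, S y -> le y x) /\
  (forall z, P z -> (forall y, S y -> le y z) -> le x z).

Definition pair_set (x y : T) : T -> Prop := fun z => z = x \/ z = y.

Definition ACC : Prop :=
  forall c : nat -> T, (forall k, P (c k)) -> (forall k, le (c k) (c k.+1)) ->
  exists N, forall m, (N <= m)%N -> c m = c N.

Definition meet_irreducible (top : T) (c : T) : Prop :=
  P c /\ c <> top /\
  forall x y, P x -> P y -> is_glb_in (pair_set x y) c -> c = x \/ c = y.

Definition sublattice (K : T -> Prop) : Prop :=
  (forall k, K k -> P k) /\
  (forall k1 k2 m, K k1 -> K k2 -> is_glb_in (pair_set k1 k2) m -> K m) /\
  (forall k1 k2 m, K k1 -> K k2 -> is_lub_in (pair_set k1 k2) m -> K m).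

Definition block (bot top : T) (K : T -> Prop) : Prop :=
  sublattice K /\ (exists c, P c /\ ~ K c) /\
  (exists k, K k /\ k <> bot /\ k <> top) /\
  (forall k, K k -> k <> bot -> k <> top ->
     forall x, P x -> (le k x \/ le x k) -> x <> bot -> x <> top -> K x).

Definition complete_block (bot top : T) (K : T -> Prop) : Prop :=
  block bot top K /\ K bot /\ K top.
End Poset.

Section Ctx.
Context {d : Order.disp_t} {L : tbLatticeType d}.
Variables (n : nat) (A B : eqType) (R : A -> B -> L) (sigma : A -> B -> 'I_n).
Variables (conj sw nw : 'I_n -> L -> L -> L).

Definition separable_subcontext (Y : A -> Prop) (X : B -> Prop) : Prop :=
  (exists a, Y a) /\ (exists a, ~ Y a) /\ (exists b, X b) /\ (exists b, ~ X b) /\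
  (exists a b, Y a /\ X b /\ R a b != \bot) /\
  (forall a b, Y a -> ~ X b -> R a b = \bot) /\
  (forall a b, ~ Y a -> X b -> R a b = \bot).

Definition independent_decomposition (Lam : Type)
    (AL : Lam -> A -> Prop) (BL : Lam -> B -> Prop) : Prop :=
  inhabited Lam /\
  (forall l, separable_subcontext (AL l) (BL l)) /\
  (forall a, exists! l, AL l a) /\
  (forall b, exists! l, BL l b) /\
  (forall l a b, ((~ AL l a /\ BL l b) \/ (AL l a /\ ~ BL l b)) ->
      ~ has_zero_divisors (conj (sigma a b))).

Let M := is_concept R sigma sw nw.

Definition MF (A' : A -> Prop) (c : @concept_t d L A B) : Prop :=
  meet_irreducible M (@cle d L A B) (@top_concept d L A B) c /\
  exists a x, A' a /\ derive_down R sigma nw (phi a x) c.1 /\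
  derive_up R sigma sw c.1 c.2.

Definition Mg (A' : A -> Prop) (c : @concept_t d L A B) : @concept_t d L A B -> Prop :=
  fun e => MF A' e /\ cle c e.

Definition Kset (A' : A -> Prop) : @concept_t d L A B -> Prop :=
  fun c => (M c /\ is_glb_in M (@cle d L A B) (Mg A' c) c)
           \/ c = @top_concept d L A B \/ c = @bot_concept d L A B.
End Ctx.

(* Main.v *)
Require Import Defs.
From HB Require Import structures.
From mathcomp Require Import all_boot all_order.
From Stdlib Require Import Classical ClassicalEpsilon FunctionalExtensionality.
Import Order.Theory.
Local Open Scope order_scope.
Set Implicit Arguments. Unset Strict Implicit.

Lemma acc_max (T : Type) (P : T -> Prop) (le : T -> T -> Prop) (S : T -> Prop) s0 :
  ACC P le -> (forall x, S x -> P x) -> S s0 ->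
  exists m, S m /\ forall y, S y -> le m y -> y = m.
Proof.
move=> Hacc HSP Hs0; apply: NNPP => Hn.
have H : forall x, S x -> exists y, S y /\ le x y /\ y <> x.
  move=> x Sx; apply: NNPP => Hy; apply: Hn; exists x; split => // y Sy lxy.
  apply: NNPP => hne; apply: Hy; by exists y.
have step : forall x : {x | S x}, {y : {x | S x} | le (sval x) (sval y) /\ sval y <> sval x}.
  move=> [x Sx]; case: (constructive_indefinite_description _ (H x Sx)) => y [Sy Hy].
  by exists (exist _ y Sy).
pose f := fun k => iter k (fun x => sval (step x)) (exist _ s0 Hs0 : {x | S x}).
have [N HN] := Hacc (fun k => sval (f k)) (fun k => HSP _ (svalP (f k)))
  (fun k => (svalP (step (f k))).1).
exact: (svalP (step (f N))).2 (HN N.+1 (leqnSn N)).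
Qed.

Section Main.
Context {d : Order.disp_t} {L : tbLatticeType d}.
Variable n : nat.
Variables cj sw nw : 'I_n -> L -> L -> L.
Hypothesis Hadj : forall i, adjoint_triple (cj i) (sw i) (nw i).
Hypothesis Hunit : forall i (x : L), cj i x \top = x /\ cj i \top x = x.
Variables A B : eqType.
Variable R : A -> B -> L.
Variable sigma : A -> B -> 'I_n.
Hypothesis HL : complete_lattice (L := L).
Hypothesis Hnorm : normalized_context R.

Notation M := (is_concept R sigma sw nw).
Notation top := (@top_concept d L A B).
Notation bot := (@bot_concept d L A B).
Notation cle := (@cle d L A B).

Hypothesis Hacc : ACC M cle.

Lemma swnw i x y z : (x <= sw i z y) <-> (y <= nw i z x).
Proof. move: (Hadj i x y z); tauto. Qed.

Lemma sw_top i z : sw i z \top = z.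
Proof.
apply/le_anti/andP; split.
  have [[h1 _] _] := Hadj i (sw i z \top) \top z.
  by have := h1 (lexx _); rewrite (Hunit i _).1.
have [[_ h2] _] := Hadj i z \top z; apply: h2; by rewrite (Hunit i z).1.
Qed.

Lemma nw_top i z : nw i z \top = z.
Proof.
apply/le_anti/andP; split.
  have [_ [_ h1]] := Hadj i \top (nw i z \top) z.
  by have := h1 (lexx _); rewrite (Hunit i _).2.
have [_ [h2 _]] := Hadj i \top z z; apply: h2; by rewrite (Hunit i z).2.
Qed.

Lemma sw_bot i z : sw i z \bot = \top.
Proof. apply/le_anti; rewrite lex1 /=; apply/swnw; exact: le0x. Qed.

Lemma nw_bot i z : nw i z \bot = \top.
Proof. apply/le_anti; rewrite lex1 /=; apply/swnw; exact: le0x. Qed.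

Lemma nw_nzd i x : ~ has_zero_divisors (cj i) -> x != \bot -> nw i \bot x = \bot.
Proof.
move=> Hz hx; set y := nw i \bot x.
have h : cj i x y <= \bot by apply: (Hadj i x y \bot).2.2; exact: lexx.
case: (eqVneq y \bot) => // hy; exfalso; apply: Hz; exists x, y; split => //; split => //.
by apply/eqP; rewrite -lex0.
Qed.

Lemma sw_nzd i y : ~ has_zero_divisors (cj i) -> y != \bot -> sw i \bot y = \bot.
Proof.
move=> Hz hy; set x := sw i \bot y.
have h : cj i x y <= \bot by apply: (Hadj i x y \bot).1.1; exact: lexx.
case: (eqVneq x \bot) => // hx; exfalso; apply: Hz; exists x, y; split => //; split => //.
by apply/eqP; rewrite -lex0.
Qed.

Lemma inf_lb (S : L -> Prop) x y : is_inf S x -> S y -> x <= y.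
Proof. by move=> [h _]; apply: h. Qed.

Lemma inf_glb (S : L -> Prop) x z : is_inf S x -> (forall y, S y -> z <= y) -> z <= x.
Proof. by move=> [_ h]; apply: h. Qed.

Lemma inf_uniq (S : L -> Prop) x y : is_inf S x -> is_inf S y -> x = y.
Proof.
move=> hx hy; apply/le_anti/andP; split.
  by apply: inf_glb hy _ => z; apply: inf_lb hx.
by apply: inf_glb hx _ => z; apply: inf_lb hy.
Qed.

Lemma le_nbot (x y : L) : x <= y -> x != \bot -> y != \bot.
Proof. move=> xy; apply: contra => /eqP yb; by rewrite -lex0 -yb. Qed.

Lemma concept_eq c1 c2 : M c1 -> M c2 -> cle c1 c2 -> cle c2 c1 -> c1 = c2.
Proof.
case: c1 c2 => [g1 f1] [g2 f2] [u1 _] [u2 _]; rewrite /cle /= => h12 h21.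
have eg : g1 = g2.
  by apply: functional_extensionality => b; apply/le_anti; rewrite h12 h21.
subst g2.
have ef : f1 = f2 by apply: functional_extensionality => a; exact: inf_uniq (u1 a) (u2 a).
by subst.
Qed.

Lemma top_M : M top.
Proof.
split => [a|b] /=; split.
- move=> y [b ->]; exact: le0x.
- move=> z hz; have [b Hb] := (Hnorm.1 a).2.
  by have := hz _ (ex_intro _ b erefl); rewrite sw_top Hb.
- by move=> y [a ->]; rewrite nw_bot.
- move=> z _; exact: lex1.
Qed.

Lemma bot_M : M bot.
Proof.
split => [a|b] /=; split.
- by move=> y [b ->]; rewrite sw_bot.
- move=> z _; exact: lex1.
- move=> y [a ->]; exact: le0x.
- move=> z hz; have [a Ha] := (Hnorm.2 b).2.
  by have := hz _ (ex_intro _ a erefl); rewrite nw_top Ha.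
Qed.

Lemma concept_of f0 : exists c, M c /\ derive_down R sigma nw f0 c.1.
Proof.
pose g := fun b => proj1_sig (constructive_indefinite_description _
   (HL (fun z => exists a, z = nw (sigma a b) (R a b) (f0 a)))).
have Hg : derive_down R sigma nw f0 g by move=> b; exact: proj2_sig _.
pose f := fun a => proj1_sig (constructive_indefinite_description _
   (HL (fun z => exists b, z = sw (sigma a b) (R a b) (g b)))).
have Hf : derive_up R sigma sw g f by move=> a; exact: proj2_sig _.
exists (g, f); split => //; split => //= b; split.
- move=> y [a ->]; apply/swnw; exact: inf_lb (Hf a) (ex_intro _ b erefl).
- move=> z hz; apply: inf_glb (Hg b) _ => y [a ->]; apply/swnw.
  have h1 : f0 a <= f a.
    apply: inf_glb (Hf a) _ => y' [b' ->]; apply/swnw.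
    exact: inf_lb (Hg b') (ex_intro _ a erefl).
  apply: le_trans h1 _; apply/swnw; exact: hz _ (ex_intro _ a erefl).
Qed.

Lemma phi_down a x g : derive_down R sigma nw (phi a x) g ->
  forall b, g b = nw (sigma a b) (R a b) x.
Proof.
move=> Hg b; apply: inf_uniq (Hg b) _; split.
- move=> y [a' ->]; rewrite /phi; case: eqP => [->|_]; first exact: lexx.
  by rewrite nw_bot lex1.
- move=> z hz.
  by have := hz (nw (sigma a b) (R a b) (phi a x a)) (ex_intro _ a erefl); rewrite /phi eqxx.
Qed.

Lemma up_ge_phi a x g f : derive_down R sigma nw (phi a x) g ->
  derive_up R sigma sw g f -> x <= f a.
Proof.
move=> Hg Hf; apply: inf_glb (Hf a) _ => y [b ->]; apply/swnw.
rewrite (phi_down Hg b); exact: lexx.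
Qed.

Lemma bot_of c : M c -> (forall b, c.1 b = \bot) -> c = bot.
Proof.
move=> Mc h; apply: concept_eq => //; first exact: bot_M.
  by move=> b; rewrite h.
move=> b; exact: le0x.
Qed.

Lemma top_of c : M c -> (forall a, c.2 a = \bot) -> c = top.
Proof.
move=> Mc h; apply: concept_eq => //; first exact: top_M.
  move=> b; exact: lex1.
move=> b /=; apply: inf_glb (Mc.2 b) _ => y [a ->]; by rewrite h nw_bot.
Qed.

Lemma ex_nb c : M c -> c <> bot -> exists b, c.1 b != \bot.
Proof.
move=> Mc cb; apply: NNPP => hn; apply: cb; apply: bot_of => // b.
case: (eqVneq (c.1 b) \bot) => // h; exfalso; apply: hn; by exists b.
Qed.

Lemma ex_na c : M c -> c <> top -> exists a, c.2 a != \bot.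
Proof.
move=> Mc cb; apply: NNPP => hn; apply: cb; apply: top_of => // a.
case: (eqVneq (c.2 a) \bot) => // h; exfalso; apply: hn; by exists a.
Qed.

Variable Lam : Type.
Variables (AL : Lam -> A -> Prop) (BL : Lam -> B -> Prop).
Hypothesis Hdec : independent_decomposition R sigma cj AL BL.

Lemma AL_uniq l1 l2 a : AL l1 a -> AL l2 a -> l1 = l2.
Proof.
have [_ [_ [HA _]]] := Hdec; have [l [_ Hu]] := HA a.
by move=> h1 h2; rewrite -(Hu _ h1) -(Hu _ h2).
Qed.

Lemma BL_uniq l1 l2 b : BL l1 b -> BL l2 b -> l1 = l2.
Proof.
have [_ [_ [_ [HB _]]]] := Hdec; have [l [_ Hu]] := HB b.
by move=> h1 h2; rewrite -(Hu _ h1) -(Hu _ h2).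
Qed.

Lemma sup1 c l b a : M c -> BL l b -> c.1 b != \bot -> ~ AL l a -> c.2 a = \bot.
Proof.
move=> [_ Hd] hb hc ha; case: (eqVneq (c.2 a) \bot) => // hne; exfalso.
have le1 : c.1 b <= nw (sigma a b) (R a b) (c.2 a) := inf_lb (Hd b) (ex_intro _ a erefl).
have [_ [Hsep [_ [_ Hcross]]]] := Hdec.
have [_ [_ [_ [_ [_ [_ H7]]]]]] := Hsep l.
rewrite (H7 a b ha hb) (nw_nzd (Hcross l a b (or_introl (conj ha hb))) hne) lex0 in le1.
by rewrite le1 in hc.
Qed.

Lemma sup2 c l a b : M c -> AL l a -> c.2 a != \bot -> ~ BL l b -> c.1 b = \bot.
Proof.
move=> [Hu _] ha hc hb; case: (eqVneq (c.1 b) \bot) => // hne; exfalso.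
have le1 : c.2 a <= sw (sigma a b) (R a b) (c.1 b) := inf_lb (Hu a) (ex_intro _ b erefl).
have [_ [Hsep [_ [_ Hcross]]]] := Hdec.
have [_ [_ [_ [_ [_ [H6 _]]]]]] := Hsep l.
rewrite (H6 a b ha hb) (sw_nzd (Hcross l a b (or_intror (conj ha hb))) hne) lex0 in le1.
by rewrite le1 in hc.
Qed.

Definition inb l (c : @concept_t d L A B) := M c /\ c <> top /\ c <> bot /\
  (forall b, c.1 b != \bot -> BL l b) /\ (forall a, c.2 a != \bot -> AL l a).

Lemma block_of c : M c -> c <> top -> c <> bot -> exists l, inb l c.
Proof.
move=> Mc ct cb; have [a ha] := ex_na Mc ct; have [b hb] := ex_nb Mc cb.
have [_ [_ [HA _]]] := Hdec; have [l [hl _]] := HA a.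
have hB : forall b', c.1 b' != \bot -> BL l b'.
  move=> b' hb'; case: (classic (BL l b')) => // hn; exfalso.
  by move: hb'; rewrite (sup2 Mc hl ha hn) eqxx.
exists l; split => //; split => //; split => //; split => // a' ha'.
case: (classic (AL l a')) => // hn; exfalso.
by move: ha'; rewrite (sup1 Mc (hB b hb) hb hn) eqxx.
Qed.

Lemma same_block l m c c' : inb l c -> inb m c' -> cle c c' -> l = m.
Proof.
move=> [Mc [_ [cb [hB _]]]] [_ [_ [_ [hB' _]]]] cc.
have [b hb] := ex_nb Mc cb.
exact: BL_uniq (hB b hb) (hB' b (le_nbot (cc b) hb)).
Qed.

Notation K l := (Kset R sigma sw nw (AL l)).

Lemma K_inb l c : inb l c -> K l c.
Proof.
move=> [Mc [ct [cb [cB cA]]]]; left; split => //; split => //; split.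
  by move=> e [].
move=> z Mz Hz; apply: NNPP => nzc.
pose S m := M m /\ cle c m /\ ~ cle z m.
have [m [[Mm [cm zm]] Hmax]] := @acc_max _ _ _ S c Hacc (fun x h => h.1)
   (conj Mc (conj (fun b => lexx _) nzc)).
have Hup : forall m', M m' -> cle m m' -> m' <> m -> cle z m'.
  move=> m' Mm' mm' ne; apply: NNPP => zm'; apply: ne; apply: Hmax => //.
  split => //; split => // b; exact: le_trans (cm b) (mm' b).
apply: (zm); apply: Hz; split => //.
have mt : m <> top by move=> mt; apply: (zm); rewrite mt => b; exact: lex1.
split.
  split => //; split => // x y Mx My [_ [Hlb Hglb]].
  apply: NNPP => hn.
  have hx : x <> m by move=> h; apply: hn; left.
  have hy : y <> m by move=> h; apply: hn; right.
  apply: (zm); apply: Hglb => // w [->|->].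
    exact: Hup x Mx (Hlb _ (or_introl erefl)) hx.
  exact: Hup y My (Hlb _ (or_intror erefl)) hy.
have [a Ha] : exists a, derive_down R sigma nw (phi a (m.2 a)) m.1.
  apply: NNPP => hn; apply: (zm) => b; have [Mu Md] := Mm.
  apply: inf_glb (Md b) _ => y [a ->].
  have [ca [Mca Hca]] := concept_of (phi a (m.2 a)).
  have mca : cle m ca.
    move=> b'; rewrite (phi_down Hca b'); exact: inf_lb (Md b') (ex_intro _ a erefl).
  have neq : ca <> m by move=> e; apply: hn; exists a; move: Hca; rewrite e.
  by have := Hup ca Mca mca neq b; rewrite (phi_down Hca b).
exists a, (m.2 a); split; last by split => //; exact: Mm.1.
have [b0 hb0] := ex_nb Mc cb.
have hm0 : m.1 b0 != \bot := le_nbot (cm b0) hb0.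
apply: NNPP => nA; have m2a := sup1 Mm (cB b0 hb0) hm0 nA.
apply: (zm) => b; rewrite (phi_down Ha b) m2a nw_bot; exact: lex1.
Qed.

Lemma inb_K l c : K l c -> c <> top -> c <> bot -> inb l c.
Proof.
case=> [[Mc [_ [Hlb Hglb]]]|[]//] ct cb.
have [mu Hmu] := block_of Mc ct cb.
suff -> : l = mu by [].
apply: NNPP => lm; apply: ct; apply: concept_eq => //; first exact: top_M.
  move=> b; exact: lex1.
apply: Hglb; first exact: top_M.
move=> e [[[Me [et _]] [a [x [hal [Hd Hu]]]]] ce]; exfalso.
have eb : e <> bot.
  move=> eb; apply: cb; apply: concept_eq => //; first exact: bot_M.
    by rewrite -eb.
  move=> b; exact: le0x.
have [nu Hnu] := block_of Me et eb.
have mn := same_block Hmu Hnu ce.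
have xa := up_ge_phi Hd Hu.
case: (eqVneq (e.2 a) \bot) => h.
  apply: et; apply: concept_eq => //; first exact: top_M.
    move=> b; exact: lex1.
  move=> b /=; rewrite (phi_down Hd b).
  rewrite h lex0 in xa; move/eqP: xa => ->; rewrite nw_bot; exact: lexx.
apply: lm; rewrite mn; exact: AL_uniq hal (Hnu.2.2.2.2 a h).
Qed.

Lemma K_M l c : K l c -> M c.
Proof. by case=> [[Mc _]|[->|->]]; [|exact: top_M|exact: bot_M]. Qed.

Lemma phi_top_concept a : exists c, M c /\ c <> top /\ c <> bot /\ c.2 a != \bot.
Proof.
have [c [Mc Hc]] := concept_of (phi a \top).
have [b Hb] := (Hnorm.1 a).1.
have tb : (\top : L) != \bot := le_nbot (lex1 _) Hb.
have c2 : c.2 a != \bot := le_nbot (up_ge_phi Hc Mc.1) tb.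
exists c; split => //; split.
  by move=> e; move: c2; rewrite e /= eqxx.
split => //.
move=> e; have := phi_down Hc b; rewrite nw_top e /= => h.
by rewrite -h eqxx in Hb.
Qed.

Lemma block_main l : complete_block M cle bot top (K l).
Proof.
have Kt : K l top by right; left.
have Kb : K l bot by right; right.
split => //; split; last split; last split.
- split; first exact: K_M.
  split.
  + move=> k1 k2 m K1 K2 [Mm [Hlb Hglb]].
    case: (classic (m = top)) => [->|mt] //; case: (classic (m = bot)) => [->|mb] //.
    have [mu Hmu] := block_of Mm mt mb.
    suff e : l = mu by apply: K_inb; rewrite e.
    case: (classic (k1 = top /\ k2 = top)) => [[e1 e2]|hn].
      exfalso; apply: mt; apply: concept_eq => //; first exact: top_M.
        move=> b; exact: lex1.
      apply: Hglb; first exact: top_M.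
      move=> w [->|->]; rewrite ?e1 ?e2 => b; exact: lexx.
    have [k [Kk [mk kt]]] : exists k, K l k /\ cle m k /\ k <> top.
      case: (classic (k1 = top)) => h1.
        exists k2; split => //; split; first exact: Hlb _ (or_intror erefl).
        by move=> h2; apply: hn.
      exists k1; split => //; split => //; exact: Hlb _ (or_introl erefl).
    have kb : k <> bot.
      move=> kb; apply: mb; apply: bot_of => // b.
      by apply/eqP; rewrite -lex0; have := mk b; rewrite kb.
    symmetry; exact: same_block Hmu (inb_K Kk kt kb) mk.
  + move=> k1 k2 m K1 K2 [Mm [Hlb Hglb]].
    case: (classic (m = top)) => [->|mt] //; case: (classic (m = bot)) => [->|mb] //.
    have [mu Hmu] := block_of Mm mt mb.
    suff e : l = mu by apply: K_inb; rewrite e.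
    case: (classic (k1 = bot /\ k2 = bot)) => [[e1 e2]|hn].
      exfalso; apply: mb; apply: bot_of => // b; apply/eqP; rewrite -lex0.
      have := Hglb bot bot_M; rewrite /=; apply.
      move=> w [->|->]; rewrite ?e1 ?e2 => b'; exact: lexx.
    have [k [Kk [km kb]]] : exists k, K l k /\ cle k m /\ k <> bot.
      case: (classic (k1 = bot)) => h1.
        exists k2; split => //; split; first exact: Hlb _ (or_intror erefl).
        by move=> h2; apply: hn.
      exists k1; split => //; split => //; exact: Hlb _ (or_introl erefl).
    have kt : k <> top.
      move=> kt; apply: mt; apply: concept_eq => //; first exact: top_M.
        move=> b; exact: lex1.
      by rewrite -kt.
    exact: same_block (inb_K Kk kt kb) Hmu km.
- have [_ [Hsep _]] := Hdec; have [_ [[a na] _]] := Hsep l.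
  have [c [Mc [ct [cb c2]]]] := phi_top_concept a.
  exists c; split => // Kc; apply: na; exact: (inb_K Kc ct cb).2.2.2.2 a c2.
- have [_ [Hsep _]] := Hdec; have [[a ha] _] := Hsep l.
  have [c [Mc [ct [cb c2]]]] := phi_top_concept a.
  have [mu Hmu] := block_of Mc ct cb.
  have e : l = mu := AL_uniq ha (Hmu.2.2.2.2 a c2).
  exists c; split => //; apply: K_inb; by rewrite e.
- move=> k Kk kb kt x Mx [kx|xk] xb xt; have Hk := inb_K Kk kt kb;
    have [mu Hx] := block_of Mx xt xb; apply: K_inb.
    by rewrite (same_block Hk Hx kx).
  by rewrite -(same_block Hx Hk xk).
Qed.

End Main.

Theorem proposition31 (d : Order.disp_t) (L : tbLatticeType d)
  (HL : complete_lattice (L := L)) (n : nat)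
  (conj sw nw : 'I_n -> L -> L -> L)
  (Hadj : forall i, adjoint_triple (conj i) (sw i) (nw i))
  (Hunit : forall i (x : L), conj i x \top = x /\ conj i \top x = x)
  (A B : eqType) (HA : inhabited A) (HB : inhabited B)
  (R : A -> B -> L) (sigma : A -> B -> 'I_n)
  (Hnorm : normalized_context R)
  (Hacc : ACC (is_concept R sigma sw nw) (@cle d L A B))
  (Lam : Type) (AL : Lam -> A -> Prop) (BL : Lam -> B -> Prop)
  (Hdec : independent_decomposition R sigma conj AL BL) :
  forall l : Lam,
    complete_block (is_concept R sigma sw nw) (@cle d L A B)
      (@bot_concept d L A B) (@top_concept d L A B) (Kset R sigma sw nw (AL l)).
Proof.
move=> l; exact (block_main Hadj Hunit HL Hnorm Hacc Hdec l).
Qed.
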